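(* Let $a=1/\sqrt3$ and $b=\sqrt{2/3}$, and consider the eleven unit vectors in $\mathbb{R}^4$ given by the columns of $$\begin{pmatrix}1&0&0&0&0&a&a&a&a&a&a\\0&a&-a&a&a&b&-b&0&0&0&0\\0&a&a&-a&a&0&0&b&-b&0&0\\0&a&a&a&-a&0&0&0&0&b&-b\end{pmatrix}.$$ To each column $(r_0,r_1,r_2,r_3)$ associate the element of $\operatorname{PU}(2)$ represented by $r_0I+i(r_1X+r_2Y+r_3Z)$, and give the first element weight $1/16$ and each of the remaining ten weight $3/32$. This weighted set of $11$ elements is a weighted unitary $2$-design in $\operatorname{PU}(2)$.
   Context: $X,Y,Z$ are the Pauli matrices $X=\begin{pmatrix}0&1\\1&0\end{pmatrix}$, $Y=\begin{pmatrix}0&-i\\i&0\end{pmatrix}$, $Z=\begin{pmatrix}1&0\\0&-1\end{pmatrix}$. $\operatorname{PU}(2)=\operatorname{U}(2)/\operatorname{U}(1)$ with Haar probability measure $\mu$. A weighted unitary $2$-design is a finite $\mathscr{D}\subset\operatorname{PU}(d)$ with weights $w>0$, $\sum w=1$, and $\sum_{x}w(x)U(x)^{\otimes2}\otimes(U(x)^{\otimes2})^\dagger=\int d\mu(x)U(x)^{\otimes2}\otimes(U(x)^{\otimes2})^\dagger$, $U(x)$ a representative of $x$. *)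

(* Defs.v *)
From Stdlib Require Import Reals Lra List.
Import ListNotations.
Open Scope R_scope.

Definition C := (R * R)%type.
Definition C0 : C := (0, 0).
Definition C1 : C := (1, 0).
Definition Ci : C := (0, 1).
Definition Cadd (x y : C) : C := (fst x + fst y, snd x + snd y).
Definition Cmul (x y : C) : C :=
  (fst x * fst y - snd x * snd y, fst x * snd y + snd x * fst y).
Definition Cconj (x : C) : C := (fst x, - snd x).
Definition Cscale (r : R) (x : C) : C := (r * fst x, r * snd x).
Definition Cnorm2 (x : C) : R := fst x * fst x + snd x * snd x.

(* ---------- 2x2 complex matrices, indices in bool (false = 0, true = 1) ---------- *)
Definition M2 := bool -> bool -> C.

Definition Id2 : M2 := fun i j => if Bool.eqb i j then C1 else C0.
Definition PauliX : M2 := fun i j => if Bool.eqb i j then C0 else C1.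
Definition PauliY : M2 := fun i j =>
  match i, j with
  | false, true => (0, -1)
  | true, false => (0, 1)
  | _, _ => C0
  end.
Definition PauliZ : M2 := fun i j =>
  match i, j with
  | false, false => C1
  | true, true => (-1, 0)
  | _, _ => C0
  end.

Definition su2 (r0 r1 r2 r3 : R) : M2 := fun p q =>
  Cadd (Cscale r0 (Id2 p q))
       (Cmul Ci (Cadd (Cscale r1 (PauliX p q))
                      (Cadd (Cscale r2 (PauliY p q)) (Cscale r3 (PauliZ p q))))).

(* Entry ((a,b,c,d),(e,f,g,h)) of U^{(x)2} (x) (U^{(x)2})^dagger:
   (U (x) U)_{(a,b),(e,f)} * ((U (x) U)^dagger)_{(c,d),(g,h)}
   = U_{a e} U_{b f} conj(U_{g c}) conj(U_{h d}). *)
Definition moment_entry (U : M2) (a b c d e f g h : bool) : C :=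
  Cmul (Cmul (U a e) (U b f)) (Cmul (Cconj (U g c)) (Cconj (U h d))).

Definition same_in_PU2 (U V : M2) : Prop :=
  exists lam : C, Cnorm2 lam = 1 /\ forall p q, U p q = Cmul lam (V p q).

(* Every element of PU(2) has a representative r0 I + i(r1 X + r2 Y + r3 Z) with
   r in the unit sphere S^3 (i.e. in SU(2)); the Haar probability measure on PU(2)
   is the push-forward of the normalised uniform (Haar) measure on S^3 = SU(2).
   We integrate over S^3 in hyperspherical coordinates
     r = (cos psi, sin psi cos th, sin psi sin th cos ph, sin psi sin th sin ph),
   psi, th in [0,pi], ph in [0,2pi], density sin^2 psi sin th, total mass 2 pi^2. *)
Definition is_RInt (f : R -> R) (lo hi v : R) : Prop :=
  exists pr : Riemann_integrable f lo hi, RiemannInt pr = v.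

Definition haar_integral_PU2 (F : R -> R -> R -> R -> R) (v : R) : Prop :=
  exists (g : R -> R -> R) (h : R -> R),
    (forall psi th,
       is_RInt (fun ph =>
          F (cos psi) (sin psi * cos th) (sin psi * sin th * cos ph)
            (sin psi * sin th * sin ph) * (sin psi ^ 2 * sin th))
         0 (2 * PI) (g psi th)) /\
    (forall psi, is_RInt (g psi) 0 PI (h psi)) /\
    is_RInt h 0 PI (2 * PI ^ 2 * v).

Definition ca : R := 1 / sqrt 3.
Definition cb : R := sqrt (2 / 3).

Definition design_points : list (R * R * R * R) :=
  [ (1, 0, 0, 0);
    (0, ca, ca, ca);
    (0, -ca, ca, ca);
    (0, ca, -ca, ca);
    (0, ca, ca, -ca);
    (ca, cb, 0, 0);
    (ca, -cb, 0, 0);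
    (ca, 0, cb, 0);
    (ca, 0, -cb, 0);
    (ca, 0, 0, cb);
    (ca, 0, 0, -cb) ].

Definition design_weights : list R :=
  [ 1/16; 3/32; 3/32; 3/32; 3/32; 3/32; 3/32; 3/32; 3/32; 3/32; 3/32 ].

Definition pt_mat (r : R * R * R * R) : M2 :=
  match r with (r0, r1, r2, r3) => su2 r0 r1 r2 r3 end.

Definition pt (i : nat) : M2 := pt_mat (nth i design_points (0, 0, 0, 0)).
Definition wt (i : nat) : R := nth i design_weights 0.

Fixpoint Csum (n : nat) (f : nat -> C) : C :=
  match n with O => C0 | S k => Cadd (Csum k f) (f k) end.

Definition weighted_moment (a b c d e f g h : bool) : C :=
  Csum 11 (fun i => Cscale (wt i) (moment_entry (pt i) a b c d e f g h)).

(* Main.v *)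
From Coquelicot Require Import Coquelicot.
From Stdlib Require Import Reals Lra Lia List Nsatz.
Require Import Defs.
Open Scope R_scope.
Notation CI := Coquelicot.RInt.is_RInt.

Lemma CI_deriv (F f : R -> R) a b :
  (forall x, is_derive F x (f x)) -> (forall x, continuous f x) -> CI f a b (F b - F a).
Proof. intros H1 H2. apply (is_RInt_derive F f a b); intros; auto. Qed.

Lemma CI_lin (f g : R -> R) (a b u v k l : R) : CI f a b u -> CI g a b v ->
  CI (fun x => k * f x + l * g x) a b (k * u + l * v).
Proof. intros H1 H2. exact (is_RInt_plus (fun x => k * f x) (fun x => l * g x) a b (k*u) (l*v)
  (is_RInt_scal f a b k u H1) (is_RInt_scal g a b l v H2)). Qed.

Lemma CI_scal (f : R -> R) (a b u k : R) : CI f a b u -> CI (fun x => k * f x) a b (k * u).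
Proof. intros H. exact (is_RInt_scal f a b k u H). Qed.

Lemma CI_ext (f g : R -> R) (a b u v : R) : (forall x, f x = g x) -> u = v -> CI f a b u -> CI g a b v.
Proof. intros H e H1. subst v. apply (is_RInt_ext (V:=R_NormedModule) f); auto. Qed.

Lemma exd_cont (f : R -> R) x : ex_derive f x -> continuous f x.
Proof. intro H. exact (ex_derive_continuous (K:=R_AbsRing) (V:=R_NormedModule) f x H). Qed.

Lemma cont_cs p q x : continuous (fun x => cos x ^ p * sin x ^ q) x.
Proof. apply exd_cont. auto_derive. auto. Qed.

Fixpoint J0 T q := match q with
  | O => T | S O => 1 - cos T
  | S (S q') => (INR q' + 1) / (INR q' + 2) * J0 T q' end.
Fixpoint Ival T p q := match p with
  | O => J0 T q | S O => 0
  | S (S p') => (INR p' + 1) / (INR p' + INR q + 2) * Ival T p' q end.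

Lemma INR_pos n : 0 <= INR n. Proof. apply pos_INR. Qed.

Lemma J0_ok T : sin T = 0 -> forall q, CI (fun x => cos x ^ 0 * sin x ^ q) 0 T (J0 T q).
Proof.
  intros hT.
  assert (H : forall q, CI (fun x => cos x ^ 0 * sin x ^ q) 0 T (J0 T q) /\
                        CI (fun x => cos x ^ 0 * sin x ^ S q) 0 T (J0 T (S q))).
  2:{ intro q; exact (proj1 (H q)). }
  induction q as [|q [IH1 IH2]].
  - split.
    + eapply CI_ext; [| | apply (CI_deriv (fun x => x) (fun _ => 1))].
      * intro; cbn [J0 Ival pow]; ring.
      * cbn [J0 Ival pow]; ring.
      * intro; auto_derive; auto.
      * intro; apply continuous_const.
    + eapply CI_ext; [| | apply (CI_deriv (fun x => - cos x) (fun x => sin x))].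
      * intro; cbn [J0 Ival pow]; ring.
      * cbn [J0 Ival pow]; rewrite cos_0; ring.
      * intro; auto_derive; auto; ring.
      * intro. apply exd_cont. auto_derive. auto.
  - split; [exact IH2|].
    assert (HD : forall x, is_derive (fun x => cos x * sin x ^ (S q)) x
       ((INR q + 1) * sin x ^ q - (INR q + 2) * sin x ^ (S (S q)))).
    { intro x. auto_derive. auto. cbn [pow Nat.pred].
      change (match q with | 0%nat => 1 | S _ => INR q + 1 end) with (INR (S q)); rewrite S_INR.
      pose proof (sin2_cos2 x) as H. unfold Rsqr in H. generalize (sin x ^ q). intro s. nsatz. }
    assert (HC : forall x, continuous (fun x => (INR q + 1) * sin x ^ q - (INR q + 2) * sin x ^ (S (S q))) x).
    { intro x. apply exd_cont. auto_derive. auto. }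
    pose proof (CI_deriv _ _ 0 T HD HC) as HG.
    assert (Hq : INR q + 2 <> 0) by (pose proof (INR_pos q); lra).
    eapply CI_ext; [| | apply (CI_lin _ _ _ _ _ _ ((INR q + 1)/(INR q + 2)) (- / (INR q + 2)) IH1 HG)].
    + intro x. cbn [pow]. field. auto.
    + cbn [J0]. rewrite hT, sin_0. cbn [pow]. field. auto.
Qed.

Lemma Ival_ok T : sin T = 0 -> forall p q, CI (fun x => cos x ^ p * sin x ^ q) 0 T (Ival T p q).
Proof.
  intros hT.
  assert (H : forall p q, CI (fun x => cos x ^ p * sin x ^ q) 0 T (Ival T p q) /\
                        CI (fun x => cos x ^ S p * sin x ^ q) 0 T (Ival T (S p) q)).
  2:{ intros p q; exact (proj1 (H p q)). }
  induction p as [|p IH]; intro q.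
  - split. apply J0_ok; auto.
    eapply CI_ext; [| | apply (CI_deriv (fun x => sin x ^ S q / (INR q + 1)) (fun x => cos x ^ 1 * sin x ^ q))].
    + intro; auto.
    + cbn [J0 Ival pow]. rewrite hT, sin_0. field. pose proof (INR_pos q); lra.
    + intro x. auto_derive. pose proof (INR_pos q); lra. cbn [pow Nat.pred].
      change (match q with | 0%nat => 1 | S _ => INR q + 1 end) with (INR (S q)); rewrite S_INR.
      field. pose proof (INR_pos q); lra.
    + intro; apply cont_cs.
  - destruct (IH q) as [IH1 IH2]. split; [exact IH2|].
    assert (HD : forall x, is_derive (fun x => cos x ^ S p * sin x ^ (S q)) x
       (- (INR p + 1) * cos x ^ p * sin x ^ q + (INR p + INR q + 2) * cos x ^ S (S p) * sin x ^ q)).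
    { intro x. auto_derive. auto. cbn [pow Nat.pred].
      change (match q with | 0%nat => 1 | S _ => INR q + 1 end) with (INR (S q)); rewrite S_INR.
      change (match p with | 0%nat => 1 | S _ => INR p + 1 end) with (INR (S p)); rewrite S_INR.
      pose proof (sin2_cos2 x) as H. unfold Rsqr in H. generalize (sin x ^ q) (cos x ^ p). intros s c. nsatz. }
    assert (HC : forall x, continuous (fun x => - (INR p + 1) * cos x ^ p * sin x ^ q + (INR p + INR q + 2) * cos x ^ S (S p) * sin x ^ q) x).
    { intro x. apply exd_cont. auto_derive. auto. }
    pose proof (CI_deriv _ _ 0 T HD HC) as HG.
    assert (Hq : INR p + INR q + 2 <> 0) by (pose proof (INR_pos q); pose proof (INR_pos p); lra).
    eapply CI_ext; [| | apply (CI_lin _ _ _ _ _ _ ((INR p + 1)/(INR p + INR q + 2)) (/ (INR p + INR q + 2)) IH1 HG)].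
    + intro x. cbn [pow]. field. auto.
    + cbn [Ival]. rewrite hT, sin_0. cbn [pow]. field. auto.
Qed.


Definition F4 := R -> R -> R -> R -> R.

Definition integrand (F : F4) psi th ph :=
  F (cos psi) (sin psi * cos th) (sin psi * sin th * cos ph) (sin psi * sin th * sin ph)
    * (sin psi ^ 2 * sin th).

Definition HaarC (F : F4) (v : R) : Prop :=
  exists (g : R -> R -> R) (h : R -> R),
    (forall psi th, CI (integrand F psi th) 0 (2 * PI) (g psi th)) /\
    (forall psi, CI (g psi) 0 PI (h psi)) /\
    CI h 0 PI (2 * PI ^ 2 * v).

Lemma CI_to_Defs f a b v : CI f a b v -> Defs.is_RInt f a b v.
Proof.
  intro H. exists (ex_RInt_Reals_0 f a b (ex_intro _ v H)).
  rewrite <- RInt_Reals. apply is_RInt_unique. exact H.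
Qed.

Lemma HaarC_Defs F v : HaarC F v -> haar_integral_PU2 F v.
Proof.
  intros (g & h & H1 & H2 & H3). exists g, h. repeat split.
  - intros psi th. apply CI_to_Defs. exact (H1 psi th).
  - intros psi. apply CI_to_Defs. exact (H2 psi).
  - apply CI_to_Defs. exact H3.
Qed.

Lemma HaarC_lin F G u v k : HaarC F u -> HaarC G v ->
  HaarC (fun r0 r1 r2 r3 => k * F r0 r1 r2 r3 + G r0 r1 r2 r3) (k * u + v).
Proof.
  intros (g1 & h1 & A1 & B1 & C1) (g2 & h2 & A2 & B2 & C2).
  exists (fun psi th => k * g1 psi th + 1 * g2 psi th), (fun psi => k * h1 psi + 1 * h2 psi).
  repeat split.
  - intros psi th. eapply CI_ext; [| | apply (CI_lin _ _ _ _ _ _ k 1 (A1 psi th) (A2 psi th))].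
    + intro x. unfold integrand. cbv beta. ring.
    + ring.
  - intros psi. exact (CI_lin _ _ _ _ _ _ k 1 (B1 psi) (B2 psi)).
  - eapply CI_ext; [| | apply (CI_lin _ _ _ _ _ _ k 1 C1 C2)].
    + intro; cbv beta; ring.
    + ring.
Qed.

Lemma HaarC_ext F G v w : (forall r0 r1 r2 r3, F r0 r1 r2 r3 = G r0 r1 r2 r3) -> v = w ->
  HaarC F v -> HaarC G w.
Proof.
  intros E e (g & h & A & B & C). subst w. exists g, h. repeat split; auto.
  intros psi th. eapply CI_ext; [| | apply (A psi th)]; auto.
  intro x. unfold integrand. rewrite E. reflexivity.
Qed.

Lemma HaarC_zero : HaarC (fun _ _ _ _ => 0) 0.
Proof.
  exists (fun _ _ => 0), (fun _ => 0). repeat split.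
  - intros psi th. eapply CI_ext; [| | apply (CI_scal (fun x => cos x ^ 0 * sin x ^ 0) 0 (2*PI) (Ival (2*PI) 0 0) 0 (Ival_ok _ sin_2PI 0 0))].
    + intro; unfold integrand; ring.
    + ring.
  - intros psi. eapply CI_ext; [| | apply (CI_scal (fun x => cos x ^ 0 * sin x ^ 0) 0 PI (Ival PI 0 0) 0 (Ival_ok _ sin_PI 0 0))].
    + intro; cbv beta; ring.
    + ring.
  - eapply CI_ext; [| | apply (CI_scal (fun x => cos x ^ 0 * sin x ^ 0) 0 PI (Ival PI 0 0) 0 (Ival_ok _ sin_PI 0 0))].
    + intro; cbv beta; ring.
    + ring.
Qed.

Definition mono (a b c d : nat) : F4 := fun r0 r1 r2 r3 => r0 ^ a * r1 ^ b * r2 ^ c * r3 ^ d.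

Definition mono_val a b c d :=
  Ival (2 * PI) c d * Ival PI b (c + d + 1) * Ival PI a (b + c + d + 2).

Lemma HaarC_mono a b c d v : mono_val a b c d = 2 * PI ^ 2 * v -> HaarC (mono a b c d) v.
Proof.
  intro Hv.
  set (K := fun psi th => cos psi ^ a * sin psi ^ (b + c + d + 2) * (cos th ^ b * sin th ^ (c + d + 1))).
  exists (fun psi th => K psi th * Ival (2 * PI) c d).
  exists (fun psi => cos psi ^ a * sin psi ^ (b + c + d + 2) * Ival (2 * PI) c d * Ival PI b (c + d + 1)).
  repeat split.
  - intros psi th.
    eapply CI_ext; [| | apply (CI_scal _ _ _ _ (K psi th) (Ival_ok _ sin_2PI c d))].
    + intro x. unfold integrand, mono, K. rewrite !Rpow_mult_distr, !pow_add. ring.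
    + reflexivity.
  - intros psi.
    eapply CI_ext; [| | apply (CI_scal _ _ _ _ (cos psi ^ a * sin psi ^ (b + c + d + 2) * Ival (2 * PI) c d) (Ival_ok _ sin_PI b (c + d + 1)))].
    + intro x. unfold K. ring.
    + ring.
  - eapply CI_ext; [| | apply (CI_scal _ _ _ _ (Ival (2 * PI) c d * Ival PI b (c + d + 1)) (Ival_ok _ sin_PI a (b + c + d + 2)))].
    + intro x. cbv beta. ring.
    + rewrite <- Hv. unfold mono_val. ring.
Qed.


Definition ev (F:F4) (p : R*R*R*R) : R := match p with (r0,r1,r2,r3) => F r0 r1 r2 r3 end.
Fixpoint Rsumn n (f : nat -> R) := match n with O => 0 | S k => Rsumn k f + f k end.
Definition avg F := Rsumn 11 (fun i => wt i * ev F (nth i design_points (0,0,0,0))).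

Lemma ca2 : 3 * (ca * ca) = 1.
Proof. unfold ca. assert (H : sqrt 3 * sqrt 3 = 3) by (apply sqrt_sqrt; lra).
  assert (sqrt 3 <> 0) by (pose proof (sqrt_lt_R0 3); lra). replace (3 * (1 / sqrt 3 * (1 / sqrt 3))) with (3 / (sqrt 3 * sqrt 3)) by (field; auto). rewrite H. field. Qed.
Lemma cb2 : 3 * (cb * cb) = 2.
Proof. unfold cb. rewrite sqrt_sqrt; lra. Qed.

Lemma ca2' : ca ^ 2 = 1/3. Proof. pose proof ca2. cbn [pow]. lra. Qed.
Lemma cb2' : cb ^ 2 = 2/3. Proof. pose proof cb2. cbn [pow]. lra. Qed.
Lemma ca4 : ca ^ 4 = 1/9. Proof. replace (ca ^ 4) with ((ca ^ 2) ^ 2) by ring. rewrite ca2'. field. Qed.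
Lemma cb4 : cb ^ 4 = 4/9. Proof. replace (cb ^ 4) with ((cb ^ 2) ^ 2) by ring. rewrite cb2'. field. Qed.

Ltac mono_tac :=
  unfold mono_val, avg; cbn [Rsumn nth design_points wt design_weights ev mono Ival J0 Nat.add Nat.sub];
  rewrite ?cos_PI, ?cos_2PI; cbn [INR pow];
  unfold mono; cbn [pow Nat.sub]; field_simplify_eq; rewrite ?ca4, ?cb4, ?ca2', ?cb2'; field.


Lemma mono_all a b c d : (a + b + c + d = 4)%nat -> HaarC (mono a b c d) (avg (mono a b c d)).
Proof.
  intro e. apply HaarC_mono.
  assert (d = 4 - a - b - c)%nat by lia. subst d.
  destruct a as [|[|[|[|[|a]]]]]; destruct b as [|[|[|[|[|b]]]]]; destruct c as [|[|[|[|[|c]]]]];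
  try (exfalso; lia); mono_tac.
Qed.

Inductive Span : nat -> F4 -> Prop :=
| Sp_mono a b c d : Span (a+b+c+d) (mono a b c d)
| Sp_zero n : Span n (fun _ _ _ _ => 0)
| Sp_lin n k F G : Span n F -> Span n G -> Span n (fun r0 r1 r2 r3 => k * F r0 r1 r2 r3 + G r0 r1 r2 r3)
| Sp_ext n F G : Span n F -> (forall r0 r1 r2 r3, F r0 r1 r2 r3 = G r0 r1 r2 r3) -> Span n G.

Lemma avg_lin F G k : avg (fun r0 r1 r2 r3 => k * F r0 r1 r2 r3 + G r0 r1 r2 r3) = k * avg F + avg G.
Proof. unfold avg; cbn [Rsumn nth design_points wt design_weights ev]; ring. Qed.
Lemma avg_zero : avg (fun _ _ _ _ => 0) = 0.
Proof. unfold avg; cbn [Rsumn nth design_points wt design_weights ev]; ring. Qed.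
Lemma avg_ext F G : (forall r0 r1 r2 r3, F r0 r1 r2 r3 = G r0 r1 r2 r3) -> avg F = avg G.
Proof. intro E. unfold avg; cbn [Rsumn nth design_points wt design_weights ev]; rewrite !E; reflexivity. Qed.

Lemma Span_haar n F : Span n F -> n = 4%nat -> HaarC F (avg F).
Proof.
  induction 1; intro e.
  - apply mono_all; auto.
  - eapply HaarC_ext; [| | apply HaarC_zero]; [intros; reflexivity| symmetry; apply avg_zero].
  - eapply HaarC_ext; [| | apply (HaarC_lin _ _ _ _ k (IHSpan1 e) (IHSpan2 e))];
      [intros; reflexivity| symmetry; apply avg_lin].
  - eapply HaarC_ext; [exact H0 | apply avg_ext; exact H0 | auto].
Qed.

Lemma Span_cast n m F : n = m -> Span n F -> Span m F.
Proof. intros ->; auto. Qed.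

Lemma mono_mul a b c d m G : Span m G ->
  Span (a+b+c+d+m) (fun r0 r1 r2 r3 => mono a b c d r0 r1 r2 r3 * G r0 r1 r2 r3).
Proof.
  induction 1.
  - apply (Span_cast ((a+a0)+(b+b0)+(c+c0)+(d+d0))); [lia|].
    eapply Sp_ext; [apply Sp_mono|]. intros. unfold mono. rewrite !pow_add. ring.
  - eapply Sp_ext; [apply Sp_zero|]. intros; cbv beta; ring.
  - eapply Sp_ext; [apply (Sp_lin _ k _ _ IHSpan1 IHSpan2)|]. intros; cbv beta; ring.
  - eapply Sp_ext; [apply IHSpan|]. intros; cbv beta; rewrite H0; ring.
Qed.

Lemma Span_mul n m F G : Span n F -> Span m G -> Span (n+m) (fun r0 r1 r2 r3 => F r0 r1 r2 r3 * G r0 r1 r2 r3).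
Proof.
  intros H1 H2. induction H1.
  - apply mono_mul; auto.
  - eapply Sp_ext; [apply Sp_zero|]. intros; cbv beta; ring.
  - eapply Sp_ext; [apply (Sp_lin _ k _ _ IHSpan1 IHSpan2)|]. intros; cbv beta; ring.
  - eapply Sp_ext; [apply IHSpan|]. intros; cbv beta; rewrite H; ring.
Qed.

Definition CF4 := R -> R -> R -> R -> Defs.C.
Definition CSpan n (z : CF4) := Span n (fun r0 r1 r2 r3 => fst (z r0 r1 r2 r3)) /\
                                Span n (fun r0 r1 r2 r3 => snd (z r0 r1 r2 r3)).

Lemma CSpan_mul n m z w : CSpan n z -> CSpan m w ->
  CSpan (n+m) (fun r0 r1 r2 r3 => Cmul (z r0 r1 r2 r3) (w r0 r1 r2 r3)).
Proof.
  intros [z1 z2] [w1 w2]. split.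
  - eapply Sp_ext; [apply (Sp_lin _ (-1) _ _ (Span_mul _ _ _ _ z2 w2) (Span_mul _ _ _ _ z1 w1))|].
    intros; unfold Cmul; cbn [fst snd]; ring.
  - eapply Sp_ext; [apply (Sp_lin _ 1 _ _ (Span_mul _ _ _ _ z1 w2) (Span_mul _ _ _ _ z2 w1))|].
    intros; unfold Cmul; cbn [fst snd]; ring.
Qed.

Lemma CSpan_conj n z : CSpan n z -> CSpan n (fun r0 r1 r2 r3 => Cconj (z r0 r1 r2 r3)).
Proof.
  intros [z1 z2]. split.
  - eapply Sp_ext; [exact z1|]. intros; reflexivity.
  - eapply Sp_ext; [apply (Sp_lin _ (-1) _ _ z2 (Sp_zero _))|]. intros; unfold Cconj; cbn [fst snd]; ring.
Qed.

Lemma lin_span1 l0 l1 l2 l3 (F : F4) :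
  (forall r0 r1 r2 r3, F r0 r1 r2 r3 = l0 * r0 + l1 * r1 + l2 * r2 + l3 * r3) -> Span 1 F.
Proof.
  intro E. eapply Sp_ext.
  - exact (Sp_lin 1 l0 _ _ (Sp_mono 1 0 0 0) (Sp_lin 1 l1 _ _ (Sp_mono 0 1 0 0)
      (Sp_lin 1 l2 _ _ (Sp_mono 0 0 1 0) (Sp_lin 1 l3 _ _ (Sp_mono 0 0 0 1) (Sp_zero 1))))).
  - intros. rewrite E. unfold mono. cbv beta. ring.
Qed.

Lemma su2_span p q : CSpan 1 (fun r0 r1 r2 r3 => su2 r0 r1 r2 r3 p q).
Proof.
  destruct p, q; split.
  - apply (lin_span1 1 0 0 0); intros; unfold su2, Cadd, Cmul, Cscale, Ci, Id2, PauliX, PauliY, PauliZ, C0, C1; cbn; ring.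
  - apply (lin_span1 0 0 0 (-1)); intros; unfold su2, Cadd, Cmul, Cscale, Ci, Id2, PauliX, PauliY, PauliZ, C0, C1; cbn; ring.
  - apply (lin_span1 0 0 (-1) 0); intros; unfold su2, Cadd, Cmul, Cscale, Ci, Id2, PauliX, PauliY, PauliZ, C0, C1; cbn; ring.
  - apply (lin_span1 0 1 0 0); intros; unfold su2, Cadd, Cmul, Cscale, Ci, Id2, PauliX, PauliY, PauliZ, C0, C1; cbn; ring.
  - apply (lin_span1 0 0 1 0); intros; unfold su2, Cadd, Cmul, Cscale, Ci, Id2, PauliX, PauliY, PauliZ, C0, C1; cbn; ring.
  - apply (lin_span1 0 1 0 0); intros; unfold su2, Cadd, Cmul, Cscale, Ci, Id2, PauliX, PauliY, PauliZ, C0, C1; cbn; ring.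
  - apply (lin_span1 1 0 0 0); intros; unfold su2, Cadd, Cmul, Cscale, Ci, Id2, PauliX, PauliY, PauliZ, C0, C1; cbn; ring.
  - apply (lin_span1 0 0 0 1); intros; unfold su2, Cadd, Cmul, Cscale, Ci, Id2, PauliX, PauliY, PauliZ, C0, C1; cbn; ring.
Qed.

Lemma moment_span a b c d e f g h :
  CSpan 4 (fun r0 r1 r2 r3 => moment_entry (su2 r0 r1 r2 r3) a b c d e f g h).
Proof.
  unfold moment_entry.
  apply (CSpan_mul 2 2); apply (CSpan_mul 1 1); try apply su2_span; apply CSpan_conj; apply su2_span.
Qed.


Lemma same_su2 r0 r1 r2 r3 s0 s1 s2 s3 :
  same_in_PU2 (su2 r0 r1 r2 r3) (su2 s0 s1 s2 s3) -> 0 < s0*s0 + s1*s1 + s2*s2 + s3*s3 ->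
  exists u, u * u = 1 /\ r0 = u * s0 /\ r1 = u * s1 /\ r2 = u * s2 /\ r3 = u * s3.
Proof.
  intros [[u v] [Hn H]] Hs. unfold Cnorm2 in Hn; cbn [fst snd] in Hn.
  pose proof (H false false) as E1. pose proof (H false true) as E2.
  pose proof (H true false) as E3. pose proof (H true true) as E4.
  unfold su2, Cadd, Cmul, Cscale, Ci, Id2, PauliX, PauliY, PauliZ, C0, C1 in E1, E2, E3, E4; cbn in E1, E2, E3, E4.
  injection E1 as E1a E1b. injection E2 as E2a E2b. injection E3 as E3a E3b. injection E4 as E4a E4b.
  assert (V0 : v * s0 = 0) by lra. assert (V1 : v * s1 = 0) by lra.
  assert (V2 : v * s2 = 0) by lra. assert (V3 : v * s3 = 0) by lra.
  assert (Hv : v = 0).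
  { assert (v * (s0*s0 + s1*s1 + s2*s2 + s3*s3) = 0).
    { replace (v * (s0*s0 + s1*s1 + s2*s2 + s3*s3)) with ((v*s0)*s0 + (v*s1)*s1 + (v*s2)*s2 + (v*s3)*s3) by ring.
      rewrite V0, V1, V2, V3; ring. }
    apply Rmult_integral in H0. destruct H0; auto. lra. }
  subst v. exists u. repeat split; lra.
Qed.

Lemma ca_pos : 0 < ca.
Proof. unfold ca. pose proof (sqrt_lt_R0 3). apply Rdiv_lt_0_compat; lra. Qed.
Lemma cb_pos : 0 < cb.
Proof. unfold cb. apply sqrt_lt_R0. lra. Qed.

Lemma distinct_pts : forall i j : nat, (i < 11)%nat -> (j < 11)%nat -> i <> j ->
     ~ same_in_PU2 (pt i) (pt j).
Proof.
  pose proof ca_pos. pose proof cb_pos. pose proof ca2. pose proof cb2.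
  intros i j Hi Hj Hij Hs.
  destruct i as [|[|[|[|[|[|[|[|[|[|[|i]]]]]]]]]]]; destruct j as [|[|[|[|[|[|[|[|[|[|[|j]]]]]]]]]]]; try lia;
  unfold pt, pt_mat in Hs; cbn [nth design_points] in Hs;
  (apply same_su2 in Hs; [| nra]);
  destruct Hs as (u & Hu & e0 & e1 & e2 & e3); nra.
Qed.

Lemma fst_Csum n f : fst (Csum n f) = Rsumn n (fun i => fst (f i)).
Proof. induction n; cbn; [reflexivity| rewrite IHn; reflexivity]. Qed.
Lemma snd_Csum n f : snd (Csum n f) = Rsumn n (fun i => snd (f i)).
Proof. induction n; cbn; [reflexivity| rewrite IHn; reflexivity]. Qed.
Lemma Rsumn_ext n f g : (forall i, f i = g i) -> Rsumn n f = Rsumn n g.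
Proof. intro E; induction n; cbn; [reflexivity| rewrite IHn, E; reflexivity]. Qed.

Theorem mainTheorem11 :
  (forall i j : nat, (i < 11)%nat -> (j < 11)%nat -> i <> j ->
     ~ same_in_PU2 (pt i) (pt j)) /\
  (forall i : nat, (i < 11)%nat -> 0 < wt i) /\
  fold_right Rplus 0 design_weights = 1 /\
  (forall a b c d e f g h : bool,
     haar_integral_PU2
       (fun r0 r1 r2 r3 => fst (moment_entry (su2 r0 r1 r2 r3) a b c d e f g h))
       (fst (weighted_moment a b c d e f g h)) /\
     haar_integral_PU2
       (fun r0 r1 r2 r3 => snd (moment_entry (su2 r0 r1 r2 r3) a b c d e f g h))
       (snd (weighted_moment a b c d e f g h))).
Proof.
  split; [exact distinct_pts|].
  split.
  { intros i Hi. destruct i as [|[|[|[|[|[|[|[|[|[|[|i]]]]]]]]]]]; try lia; unfold wt; cbn; lra. }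
  split; [cbn; lra|].
  intros a b c d e f g h. destruct (moment_span a b c d e f g h) as [S1 S2]. split.
  - apply HaarC_Defs. eapply HaarC_ext; [| | apply (Span_haar _ _ S1 eq_refl)]; [intros; reflexivity|].
    unfold avg, weighted_moment. rewrite fst_Csum. apply Rsumn_ext. intro i.
    unfold pt. destruct (nth i design_points (0, 0, 0, 0)) as [[[x y] z] w]. reflexivity.
  - apply HaarC_Defs. eapply HaarC_ext; [| | apply (Span_haar _ _ S2 eq_refl)]; [intros; reflexivity|].
    unfold avg, weighted_moment. rewrite snd_Csum. apply Rsumn_ext. intro i.
    unfold pt. destruct (nth i design_points (0, 0, 0, 0)) as [[[x y] z] w]. reflexivity.
Qed.
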